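(* Let $\mathbf{R}=(\mathbf{R}^{\Rightarrow},\mathbf{R}^{\mathrm{o}})$ with $\mathbf{R}^{\Rightarrow}=\emptyset$, let $M$ be an $\mathbf{R}$-ordered model, $w$ a world of $M$, and $A,B$ Boolean formulas. Then $w\models\bigcirc(B/A)$ iff there exists a world $v$ with $v\models A\wedge B$ such that for every world $u$ with $u\succeq_I v$, $u\models A\rightarrow B$.
   Context: $\mathbf{R}^{\mathrm{o}}$ is a finite set of obligations $\bigcirc(B/A)$ ($A,B$ Boolean; body $b=A$, head $h=B$). An $\mathbf{R}$-ordered model is $M=(W,\succeq_N,\succeq_I,v)$ with $W\neq\emptyset$ and valuation $v$; since $\mathbf{R}^{\Rightarrow}=\emptyset$, all worlds falsify no normality conditional and $\succeq_N=W\times W$. The ideality ordering is $w_1\succeq_I w_2$ iff $V(w_1)\subseteq V(w_2)$, where $V(w)=\{r_i\in\mathbf{R}^{\mathrm{o}}:w\models b(r_i)\wedge\neg h(r_i)$ and $w\not\models b(r_j)$ for all $r_j\in\mathbf{R}^{\mathrm{o}}$ with $r_j\triangleright r_i\}$, for a fixed overriding relation $\triangleright$ on $\mathbf{R}^{\mathrm{o}}$. $\Vert A\Vert$ = worlds where $A$ holds; $\max_{\succeq_N}(X)=\{w\in X:\forall u\in X(u\succeq_N w\Rightarrow w\succeq_N u)\}$. Lifting: $U\succeq_I^{s}U'$ iff for every $u'\in U'$ there is $u\in U$ with $u\succeq_I u'$. Truth: $w\models\bigcirc(B/A)$ iff $\max_{\succeq_N}(\Vert A\wedge\neg B\Vert)\not\succeq_I^{s}\max_{\succeq_N}(\Vert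 A\wedge B\Vert)$. *)

(* Defs.v *)
From mathcomp Require Import all_boot.
Set Implicit Arguments. Unset Strict Implicit. Unset Printing Implicit Defensive.

Inductive form :=
| Atom of nat
| Top
| Bot
| Neg of form
| And of form & form
| Or of form & form
| Imp of form & form.

Fixpoint holds (v : nat -> bool) (f : form) : bool :=
  match f with
  | Atom n => v n
  | Top => true
  | Bot => false
  | Neg g => ~~ holds v g
  | And g h => holds v g && holds v h
  | Or g h => holds v g || holds v h
  | Imp g h => holds v g ==> holds v h
  end.

(* Obligation set R^o: a finite type I of rule labels, each obligation
   O(head i / body i); over j i means r_j |> r_i (r_j overrides r_i).
   Worlds: a type W with valuation val. *)
Section Model.
Variables (I : finType) (body head : I -> form) (over : rel I).
Variables (W : Type) (val : W -> nat -> bool).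

Definition sat (w : W) (A : form) : bool := holds (val w) A.

Definition ext (A : form) : W -> Prop := fun w => sat w A.

Definition viol (w : W) : pred I := fun i =>
  [&& sat w (body i), ~~ sat w (head i) &
      [forall j, over j i ==> ~~ sat w (body j)]].

Definition ideal_ge (w1 w2 : W) : Prop := forall i, viol w1 i -> viol w2 i.

(* normality ordering: since R^=> is empty, >=_N = W x W *)
Definition norm_ge (w1 w2 : W) : Prop := True.

Definition maxN (X : W -> Prop) : W -> Prop :=
  fun w => X w /\ forall u, X u -> norm_ge u w -> norm_ge w u.

Definition lift_ge (U U' : W -> Prop) : Prop :=
  forall u', U' u' -> exists u, U u /\ ideal_ge u u'.

Definition obl_true (w : W) (A B : form) : Prop :=
  ~ lift_ge (maxN (ext (And A (Neg B)))) (maxN (ext (And A B))).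

End Model.

(* Main.v *)
Require Import Defs.
From mathcomp Require Import all_boot.
From Stdlib Require Import Classical.

Theorem proposition4 (I : finType) (body head : I -> form) (over : rel I)
  (W : Type) (val : W -> nat -> bool) (w : W) (A B : form) :
  obl_true body head over val w A B <->
  exists v : W, sat val v (And A B) /\
    forall u : W, ideal_ge body head over val u v -> sat val u (Imp A B).
Proof.
split.
- move=> H. apply: NNPP => Hn. apply: H => u' [Hu' _].
  apply: NNPP => Hne. apply: Hn. exists u'. split; first exact: Hu'.
  move=> u Hu. rewrite /sat /=. case Ha: (holds (val u) A) => //=.
  case Hb: (holds (val u) B) => //. exfalso; apply: Hne.
  exists u. split; last exact: Hu. split; last by move=> *; exact: Logic.I.
  by rewrite /ext /sat /= Ha Hb.
- move=> [v [Hv Hall]] Hl.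
  have [u [[Hu _] Hge]] := Hl v (conj Hv (fun _ _ _ => Logic.I)).
  move: (Hall u Hge) Hu. rewrite /ext /sat /=.
  by case: (holds (val u) A); case: (holds (val u) B).
Qed.
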